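(* Let $G$ be a countable group acting weakly mixingly (and preserving the probability measure) on a standard probability space $(X,\mu)$, with action written $x \mapsto g\cdot x$. Let $\mathcal{G}$ be a Polish group admitting a bi-invariant complete metric $d$, and let $K \subset \mathcal{G}$ be a closed subgroup. Suppose that $\gamma : G \times X \rightarrow K$ is a $1$-cocycle, that $v : X \rightarrow \mathcal{G}$ is a measurable map and that $\theta : G \rightarrow \mathcal{G}$ is a group homomorphism such that $$\gamma(g,x) = v(g \cdot x)\, \theta(g)\, v(x)^{-1}$$ for almost every $x \in X$ and every $g\in G$. Then, whenever $v_0 \in \mathcal{G}$ is an essential value of the function $v$, we have $v(x)v_0^{-1} \in K$ for almost every $x \in X$ and $v_0\theta(g)v_0^{-1} \in K$ for all $g \in G$. *)

(* Defs.v *)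
From HB Require Import structures.
From mathcomp Require Import all_boot all_order all_algebra.
From mathcomp Require Import all_classical all_reals all_analysis.

Set Implicit Arguments.
Unset Strict Implicit.
Unset Printing Implicit Defensive.

Import Order.TTheory GRing.Theory Num.Theory.
Local Open Scope classical_set_scope.
Local Open Scope ring_scope.

Definition is_metric (R : realType) (T : Type) (d : T -> T -> R) : Prop :=
  [/\ forall x y, 0 <= d x y,
      forall x y, d x y = 0 <-> x = y,
      forall x y, d x y = d y x &
      forall x y z, d x z <= d x y + d y z].

Definition metric_complete (R : realType) (T : Type) (d : T -> T -> R) : Prop :=
  forall u : nat -> T,
    (forall e : R, 0 < e -> exists N : nat, forall m n : nat,
        (N <= m)%N -> (N <= n)%N -> d (u m) (u n) < e) ->
    exists l : T, forall e : R, 0 < e -> exists N : nat, forall n : nat,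
        (N <= n)%N -> d (u n) l < e.

Definition metric_separable (R : realType) (T : Type) (d : T -> T -> R) : Prop :=
  exists D : set T, countable D /\
    forall (x : T) (e : R), 0 < e -> exists y, D y /\ d x y < e.

Definition d_open (R : realType) (T : Type) (d : T -> T -> R) : set (set T) :=
  [set U | forall x, U x -> exists e : R, 0 < e /\ forall y, d x y < e -> U y].

Definition d_closed (R : realType) (T : Type) (d : T -> T -> R) (F : set T) : Prop :=
  d_open d (~` F).

Definition d_borel (R : realType) (T : Type) (d : T -> T -> R) : set (set T) :=
  <<s d_open d >>.

Definition bi_invariant (R : realType) (H : groupType) (d : H -> H -> R) : Prop :=
  forall x y z : H, d (z * x)%g (z * y)%g = d x y /\ d (x * z)%g (y * z)%g = d x y.

(* (𝒢, d): a Polish group admitting the bi-invariant complete metric d,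
   i.e. d is a complete, separable, bi-invariant metric inducing the topology
   (group operations are then automatically continuous). *)
Definition polish_biinv_metric (R : realType) (H : groupType) (d : H -> H -> R) : Prop :=
  [/\ is_metric d, metric_complete d, metric_separable d & bi_invariant d].

Definition is_subgroup (H : groupType) (K : set H) : Prop :=
  [/\ K 1%g,
      forall x y, K x -> K y -> K (x * y)%g &
      forall x, K x -> K (x^-1)%g].

Definition group_hom (G H : groupType) (f : G -> H) : Prop :=
  forall g h : G, f (g * h)%g = (f g * f h)%g.

(* Standard Borel space: Borel isomorphic to a Borel subset of R
   (Kuratowski: equivalent to being Borel isomorphic to a Borel subset
   of a Polish space). *)
Definition standard_borel (d : measure_display) (X : measurableType d)
    (R : realType) : Prop :=
  exists f : X -> R,
    [/\ injective f,
        measurable_fun setT f,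
        measurable (range f) &
        forall A : set X, measurable A -> measurable (f @` A)].

Definition pmp_action (G : groupType) (d : measure_display) (X : measurableType d)
    (R : realType) (mu : probability X R) (a : G -> X -> X) : Prop :=
  [/\ forall x, a 1%g x = x,
      forall g h x, a (g * h)%g x = a g (a h x),
      forall g, measurable_fun setT (a g) &
      forall g A, measurable A -> mu (a g @^-1` A) = mu A].

Definition weakly_mixing (G : groupType) (d : measure_display) (X : measurableType d)
    (R : realType) (mu : probability X R) (a : G -> X -> X) : Prop :=
  forall F : seq (set X), (forall A, A \in F -> measurable A) ->
  forall e : R, 0 < e -> exists g : G, forall A B, A \in F -> B \in F ->
    (`| mu (A `&` a g @^-1` B) - mu A * mu B | < e%:E)%E.

Definition d_measurable (d0 : measure_display) (X : measurableType d0)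
    (R : realType) (H : Type) (d : H -> H -> R) (f : X -> H) : Prop :=
  forall B : set H, d_borel d B -> measurable (f @^-1` B).

Definition cocycle (G : groupType) (d0 : measure_display) (X : measurableType d0)
    (R : realType) (mu : probability X R) (a : G -> X -> X)
    (H : groupType) (d : H -> H -> R) (K : set H) (gamma : G -> X -> H) : Prop :=
  [/\ forall g x, K (gamma g x),
      forall g, d_measurable d (gamma g) &
      forall g h : G, {ae mu, forall x, gamma (g * h)%g x = (gamma g (a h x) * gamma h x)%g}].

Definition essential_value (d0 : measure_display) (X : measurableType d0)
    (R : realType) (mu : probability X R) (H : Type) (d : H -> H -> R)
    (v : X -> H) (v0 : H) : Prop :=
  forall e : R, 0 < e -> (0 < mu [set x | (d (v x) v0 < e)%R])%E.

(* Main.v *)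
Require Import Defs.
From HB Require Import structures.
From mathcomp Require Import all_boot all_order all_algebra.
From mathcomp Require Import all_classical all_reals all_analysis.
From mathcomp Require Import lra.
Import Order.TTheory GRing.Theory Num.Theory.
Local Open Scope classical_set_scope.
Local Open Scope ring_scope.

Lemma ae_point (d0 : measure_display) (X : measurableType d0) (R : realType)
  (mu : probability X R) (P Q : set X) :
  measurable P -> (0 < mu P)%E -> {ae mu, forall x, Q x} -> exists x, P x /\ Q x.
Proof.
move=> mP P0 [N [mN N0 sub]].
apply: contrapT => hne.
have PN : P `<=` N.
  move=> x Px; apply: sub => Qx; apply: hne; by exists x.
have := @le_measure _ _ _ mu P N.
rewrite !inE => /(_ mP mN PN) h.
have : (0 < mu N)%E := lt_le_trans P0 h. by rewrite N0 ltxx.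
Qed.

Lemma ae_and (d0 : measure_display) (X : measurableType d0) (R : realType)
  (mu : probability X R) (P Q : set X) :
  {ae mu, forall x, P x} -> {ae mu, forall x, Q x} -> {ae mu, forall x, P x /\ Q x}.
Proof.
move=> hP hQ; apply: (negligibleS _ (negligibleU hP hQ)).
by move=> x /= /not_andP [h|h]; [left|right].
Qed.
Lemma alg1 (H : groupType) (vx vy wx wy t : H) :
  (vx * vy^-1)%g = ((wx * t * vx^-1)^-1 * ((wx * wy^-1) * (wy * t * vy^-1)))%g.
Proof.
by rewrite !invgM !invgK !mulgA !mulgVK.
Qed.

Lemma alg2 (H : groupType) (vx wx t v0 : H) :
  (v0 * t * v0^-1)%g = ((wx * v0^-1)^-1 * (wx * t * vx^-1) * (vx * v0^-1))%g.
Proof.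
by rewrite !invgM !invgK !mulgA !mulgVK.
Qed.

Lemma dinv (R : realType) (H : groupType) (d : H -> H -> R) :
  is_metric d -> bi_invariant d -> forall a b, d (a^-1)%g (b^-1)%g = d a b.
Proof.
move=> [_ _ dsym _] dbi a b.
have [<- _] := dbi (a^-1)%g (b^-1)%g a.
rewrite mulgV.
have [_ <-] := dbi 1%g (a * b^-1)%g b.
by rewrite mul1g mulgVK dsym.
Qed.

Theorem lemma4p8 (R : realType)
  (G : groupType) (hGcount : countable [set: G])
  (d0 : measure_display) (X : measurableType d0) (hXstd : standard_borel X R)
  (mu : probability X R) (a : G -> X -> X)
  (ha : pmp_action mu a) (hwm : weakly_mixing mu a)
  (H : groupType) (d : H -> H -> R) (hd : polish_biinv_metric d)
  (K : set H) (hKsub : is_subgroup K) (hKcl : d_closed d K)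
  (gamma : G -> X -> H) (hgamma : cocycle mu a d K gamma)
  (v : X -> H) (hv : d_measurable d v)
  (theta : G -> H) (htheta : group_hom theta)
  (heq : forall g : G,
      {ae mu, forall x, gamma g x = (v (a g x) * theta g * (v x)^-1)%g})
  (v0 : H) (hv0 : essential_value mu d v v0) :
  {ae mu, forall x, K (v x * v0^-1)%g} /\
  (forall g : G, K (v0 * theta g * v0^-1)%g).
Proof.
have [hdm _ _ dbi] := hd.
have [dge0 deq0 dsym dtri] := hdm.
have dinvv := @dinv R H d hdm dbi.
have dL : forall x y z, d (z * x)%g (z * y)%g = d x y := fun x y z => (dbi x y z).1.
have dR : forall x y z, d (x * z)%g (y * z)%g = d x y := fun x y z => (dbi x y z).2.
have [K1 KM KV] := hKsub.
have [ha1 haM ham hap] := ha.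
have [hgK _ _] := hgamma.
have open_meas : forall U, d_open d U -> measurable (v @^-1` U).
  by move=> U hU; apply: hv; apply: sub_sigma_algebra.
pose Oset r := [set h : H | exists k, K k /\ d (h * v0^-1)%g k < r].
have Oopen r : d_open d (Oset r).
  move=> h [k [Kk hk]]; exists (r - d (h * v0^-1)%g k); split; first by lra.
  move=> y hy; exists k; split => //.
  have := dtri (y * v0^-1)%g (h * v0^-1)%g k.
  rewrite dR (dsym y h); lra.
pose Bset e := [set x | d (v x) v0 < e].
have Bmeas e : measurable (Bset e).
  apply: (open_meas [set h | d h v0 < e]).
  move=> h /= hh; exists (e - d h v0); split; first by lra.
  move=> y hy /=; have := dtri y h v0; rewrite (dsym y h); lra.
pose Aset r := v @^-1` (~` Oset r).
have Ameas r : measurable (Aset r) by exact: (measurableC (open_meas _ (Oopen r))).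
have fin U : measurable U -> mu U = (fine (mu U))%:E.
  by move=> mU; rewrite fineK // fin_num_measure.
have pre_meas g U : measurable U -> measurable (a g @^-1` U).
  by move=> mU; have := ham g measurableT U mU; rewrite setTI.
have Anull r : 0 < r -> mu (Aset r) = 0%E.
  move=> r0; apply/eqP; rewrite eq_le measure_ge0 andbT leNgt; apply/negP => Apos.
  have r30 : 0 < r / 3 by lra.
  have Bpos := hv0 _ r30.
  set A := Aset r; set B := Bset (r / 3).
  have mA : measurable A by exact: Ameas.
  have mB : measurable B by exact: Bmeas.
  pose a' := fine (mu A); pose b := fine (mu B).
  have a0 : 0 < a' by move: Apos; rewrite (fin A mA) lte_fin.
  have b0 : 0 < b by move: Bpos; rewrite (fin B mB) lte_fin.
  pose e := Num.min (a' * b) (b * b).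
  have e0 : 0 < e by rewrite lt_min !mulr_gt0.
  have hF : forall C, C \in [:: A; B] -> measurable C.
    by move=> C; rewrite !inE => /orP [/eqP->|/eqP->].
  have [g hg] := hwm [:: A; B] hF e e0.
  have pos_of : forall (P : set X), measurable P -> e <= fine (mu P) * b ->
      (`| mu (P `&` a g @^-1` B) - mu P * mu B | < e%:E)%E ->
      (0 < mu (P `&` a g @^-1` B))%E.
    move=> P mP he.
    have mPB : measurable (P `&` a g @^-1` B) := measurableI _ _ mP (pre_meas g B mB).
    rewrite (fin _ mPB) (fin _ mP) (fin _ mB) -EFinM -EFinB abse_EFin !lte_fin.
    rewrite ltr_norml => /andP[h1 _].
    rewrite -/b in he h1; lra.
  have hAin : A \in [:: A; B] by rewrite !inE eqxx.
  have hBin : B \in [:: A; B] by rewrite !inE eqxx orbT.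
  have leA : e <= fine (mu A) * b by rewrite ge_min lexx.
  have leB : e <= fine (mu B) * b by rewrite ge_min lexx orbT.
  have pAB := pos_of A mA leA (hg A B hAin hBin).
  have pBB := pos_of B mB leB (hg B B hBin hBin).
  have [x [[Ax Bgx] eqx]] := @ae_point _ _ _ mu _ _ (measurableI _ _ mA (pre_meas g B mB)) pAB (heq g).
  have [y [[By Bgy] eqy]] := @ae_point _ _ _ mu _ _ (measurableI _ _ mB (pre_meas g B mB)) pBB (heq g).
  apply: Ax.
  exists ((gamma g x)^-1 * gamma g y)%g; split.
    by apply: KM; [apply: KV; apply: hgK | apply: hgK].
  have e1 : d (v x * v0^-1)%g (v x * (v y)^-1)%g < r / 3.
    by rewrite dL dinvv dsym.
  have dW : forall W z, d (W * z)%g z = d W 1%g.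
    by move=> W z; rewrite -{2}(mul1g z) dR.
  have d1 : forall p q, d (p * q^-1)%g 1%g = d p q.
    by move=> p q; rewrite -(mulgV q) dR.
  have e2 : d (v x * (v y)^-1)%g ((gamma g x)^-1 * gamma g y)%g < 2 * r / 3.
    rewrite eqx eqy (@alg1 H (v x) (v y) (v (a g x)) (v (a g y)) (theta g)).
    rewrite dL dW d1.
    have := dtri (v (a g x)) v0 (v (a g y)); rewrite (dsym v0).
    move: Bgx Bgy; rewrite /B /Bset /= => Bgx Bgy; lra.
  have := dtri (v x * v0^-1)%g (v x * (v y)^-1)%g ((gamma g x)^-1 * gamma g y)%g.
  lra.
have part1 : {ae mu, forall x, K (v x * v0^-1)%g}.
  apply: (negligibleS _ (@negligible_bigcup _ _ _ mu (fun n => Aset (n.+1%:R^-1)) _)).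
    move=> x /= nK.
    have [e [e0 he]] := hKcl _ nK.
    exists (Num.Def.archi_bound (e^-1)) => //.
    move=> [k [Kk hk]]; apply: (he k) Kk.
    apply: (lt_trans hk).
    rewrite invf_plt ?posrE ?ltr0Sn //.
    have ei : 0 < e^-1 by rewrite invr_gt0.
    have hb := archi_boundP (ltW ei).
    apply: (lt_le_trans hb).

    by rewrite ler_nat.
  move=> n; apply/negligibleP; first exact: Ameas.
  by apply: Anull; rewrite invr_gt0 ltr0Sn.
split => // g.
have F2 : {ae mu, forall x, K (v (a g x) * v0^-1)%g}.
  case: part1 => N [mN N0 sub].
  exists (a g @^-1` N); split; first exact: pre_meas.
    by rewrite hap.
  by move=> x nK; apply: sub.
have mT0 : (0 < mu setT)%E by rewrite probability_setT lte01.
have [x [_ [Kx [Kgx eqx]]]] := @ae_point _ _ _ mu _ _ measurableT mT0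
  (@ae_and _ _ _ mu _ _ part1 (@ae_and _ _ _ mu _ _ F2 (heq g))).
rewrite (@alg2 H (v x) (v (a g x))).
apply: (KM); last exact: Kx.
apply: (KM); first exact: (KV _ Kgx).
by rewrite -eqx; apply: hgK.
Qed.
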